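(* For all integers $m\ge 2$, $n\ge 2$, the state complexity of $L(M)^R\cup L(N)$, where $M$ ranges over complete DFAs with $m$ states and $N$ over complete DFAs with $n$ states (over a common alphabet), is exactly $2^m\cdot n-n+1$: for every such $M,N$ some DFA with at most $2^m\cdot n-n+1$ states accepts $L(M)^R\cup L(N)$, and there exist such $M,N$ for which the minimal complete DFA of $L(M)^R\cup L(N)$ has exactly $2^m\cdot n-n+1$ states.
   Context: DFAs are complete deterministic finite automata; $L(M)$ is the accepted language; $L^R=\{w^R: w\in L\}$ is the reversal of $L$. The state complexity of a regular language is the number of states of its minimal complete DFA; the state complexity of an operation is the maximum state complexity of its result over all argument DFAs of the given sizes. *)

(* Defs.v *)
From mathcomp Require Import all_boot.
Set Implicit Arguments. Unset Strict Implicit. Unset Printing Implicit Defensive.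

Record dfa (T : finType) (n : nat) := DFA {
  delta : 'I_n -> T -> 'I_n;
  start : 'I_n;
  final : {set 'I_n} }.

Definition run (T : finType) (n : nat) (A : dfa T n) (q : 'I_n) (w : seq T) : 'I_n :=
  foldl (delta A) q w.

Definition accepts (T : finType) (n : nat) (A : dfa T n) (w : seq T) : bool :=
  run A (start A) w \in final A.

Definition language (T : finType) := seq T -> Prop.

Definition L_of (T : finType) (n : nat) (A : dfa T n) : language T :=
  fun w => accepts A w.

Definition lrev (T : finType) (L : language T) : language T :=
  fun w => exists u, L u /\ w = rev u.

Definition lunion (T : finType) (L1 L2 : language T) : language T :=
  fun w => L1 w \/ L2 w.

Definition recognizes (T : finType) (n : nat) (A : dfa T n) (L : language T) : Prop :=
  forall w, accepts A w <-> L w.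

Definition state_complexity_is (T : finType) (L : language T) (k : nat) : Prop :=
  (exists A : dfa T k, recognizes A L) /\
  (forall k' (A : dfa T k'), recognizes A L -> k <= k').

(* Main.v *)
Require Import Defs.
From mathcomp Require Import all_boot.
Set Implicit Arguments. Unset Strict Implicit. Unset Printing Implicit Defensive.

Definition gen_dfa (T X : finType) (d : X -> T -> X) (s : X) (F : pred X) : dfa T #|X| :=
  @DFA T #|X| (fun i a => enum_rank (d (enum_val i) a)) (enum_rank s) [set i | F (enum_val i)].

Lemma gen_run (T X : finType) (d : X -> T -> X) (s : X) (F : pred X) x w :
  run (gen_dfa d s F) (enum_rank x) w = enum_rank (foldl d x w).
Proof.
elim: w x => [//|a w IH] x.
by rewrite /run /= enum_rankK; apply: IH.
Qed.

Lemma gen_acc (T X : finType) (d : X -> T -> X) (s : X) (F : pred X) w :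
  accepts (gen_dfa d s F) w = F (foldl d s w).
Proof. by rewrite /accepts gen_run inE enum_rankK. Qed.

Lemma L_char (T : finType) m n (M : dfa T m) (N : dfa T n) w :
  lunion (lrev (L_of M)) (L_of N) w <-> accepts M (rev w) || accepts N w.
Proof.
rewrite /lunion /lrev /L_of; split.
  by case=> [[u [hu ->]]|h]; rewrite ?revK ?hu ?h ?orbT.
by case/orP=> h; [left; exists (rev w); rewrite revK | right].
Qed.

Definition Xt m n := option ({S : {set 'I_m} | S != setT} * 'I_n)%type.

Lemma card_X m n : #|{: Xt m n}| = 2 ^ m * n - n + 1.
Proof.
rewrite card_option card_prod card_sig card_ord.
have -> : #|[pred x : {set 'I_m} | x != setT]| = #|{: {set 'I_m}}|.-1.
  by rewrite -(cardC1 [set: 'I_m]); apply: eq_card.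
have -> : #|{: {set 'I_m}}| = 2 ^ m.
  have := card_powerset [set: 'I_m]; rewrite cardsT card_ord => <-.
  apply: eq_card => S.
  by rewrite !inE subsetT.
by rewrite -subn1 mulnBl mul1n addn1.
Qed.

Section UB.
Variables (T : finType) (m n : nat) (M : dfa T m) (N : dfa T n).

Definition ub_step (x : Xt m n) (a : T) : Xt m n :=
  match x with
  | None => None
  | Some (X, p) =>
      match insub [set q | delta M q a \in val X] with
      | Some S' => Some (S', delta N p a)
      | None => None
      end
  end.

Definition ub_start : Xt m n :=
  match insub (final M) with Some X => Some (X, start N) | None => None end.

Definition ub_fin (x : Xt m n) : bool :=
  match x with None => true | Some (X, p) => (start M \in val X) || (p \in final N) end.

Definition Sw (w : seq T) : {set 'I_m} := [set q | run M q (rev w) \in final M].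

Definition enc (S : {set 'I_m}) (p : 'I_n) : Xt m n :=
  match insub S with Some S' => Some (S', p) | None => None end.

Lemma ub_inv w : foldl ub_step ub_start w = enc (Sw w) (run N (start N) w).
Proof.
elim/last_ind: w => [|w a IH].
  have -> : Sw [::] = final M by apply/setP => q; rewrite inE.
  by [].
rewrite foldl_rcons IH /run foldl_rcons -/(run N _ w).
have -> : Sw (rcons w a) = [set q | delta M q a \in Sw w].
  by apply/setP => q; rewrite !inE rev_rcons.
rewrite /enc; case: insubP => [X HS eqS|HS] /=.
  by rewrite eqS.
rewrite insubN //; move: HS; rewrite negbK => /eqP ->.
by apply/negPn/eqP/setP => q; rewrite !inE.
Qed.

Definition ub_dfa := gen_dfa ub_step ub_start ub_fin.

Lemma ub_rec : recognizes ub_dfa (lunion (lrev (L_of M)) (L_of N)).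
Proof.
move=> w; apply: (iff_trans _ (iff_sym (L_char M N w))).
rewrite /ub_dfa gen_acc ub_inv /enc.
case: insubP => [X HS eqS|HS] /=.
  by rewrite eqS /accepts inE.
split=> // _; move: HS; rewrite negbK => /eqP HS.
have := in_setT (start M); rewrite -HS inE /accepts => ->; by [].
Qed.
End UB.

Section LB.
Variables (m n : nat).

Definition LT := ({ffun 'I_m.+2 -> 'I_m.+2} * {ffun 'I_n.+2 -> 'I_n.+2})%type.
Definition WM : dfa LT m.+2 := @DFA LT m.+2 (fun q a => a.1 q) ord0 [set ord0].
Definition WN : dfa LT n.+2 := @DFA LT n.+2 (fun p a => a.2 p) ord0 [set ord0].

Definition letter (x : Xt m.+2 n.+2) : LT :=
  match x with
  | None => ([ffun _ => ord0], [ffun _ => ord0])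
  | Some (X, p) => ([ffun q => if q \in val X then ord0 else ord_max], [ffun _ => p])
  end.

Definition respf (x : Xt m.+2 n.+2) (b : LT) : bool :=
  match x with
  | None => true
  | Some (X, p) => (b.1 ord0 \in val X) || (b.2 p == ord0)
  end.

Lemma ifE k (c : bool) : ((if c then ord0 else @ord_max k.+1) == ord0) = c.
Proof. by case: c => //; apply/eqP => /(congr1 val). Qed.

Lemma resp_eq x b :
  accepts WM (rev [:: letter x; b]) || accepts WN [:: letter x; b] = respf x b.
Proof.
rewrite /accepts /run /= !in_set1.
case: x => [[X p]|] /=; rewrite !ffunE ?ifE //.
Qed.

Lemma exists_notin k (X : {set 'I_k}) : X != setT -> exists q, q \notin X.
Proof.
move=> hX; apply/existsP; move: hX; apply: contraR; rewrite negb_exists => /forallP H.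
by apply/eqP/setP => q; rewrite inE; move: (H q); rewrite negbK.
Qed.

Definition bq (q : 'I_m.+2) : LT := ([ffun _ => q], [ffun _ => ord_max]).
Definition bp (q : 'I_m.+2) (p : 'I_n.+2) : LT :=
  ([ffun _ => q], [ffun z => if z == p then ord0 else ord_max]).

Lemma respf_inj x y : (forall b, respf x b = respf y b) -> x = y.
Proof.
case: x => [[X p]|]; case: y => [[Y p']|] // H.
- have eXY : X = Y.
    apply: val_inj; apply/setP => q; have := H (bq q).
    by rewrite /= !ffunE /= !orbF.
  subst Y; have [q hq] := exists_notin (valP X).
  have := H (bp q p); rewrite /= !ffunE eqxx (negbTE hq) /= ifE => /esym/eqP ->.
  by [].
- have [q hq] := exists_notin (valP X).
  by have := H (bq q); rewrite /= !ffunE (negbTE hq) /=.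
- have [q hq] := exists_notin (valP Y).
  by have := H (bq q); rewrite /= !ffunE (negbTE hq) /=.
Qed.

Lemma lb k (A : dfa LT k) :
  recognizes A (lunion (lrev (L_of WM)) (L_of WN)) -> #|{: Xt m.+2 n.+2}| <= k.
Proof.
move=> hA.
have E w : accepts A w = accepts WM (rev w) || accepts WN w.
  by apply/idP/idP => h; [apply/L_char/hA | apply/hA/L_char].
have inj : injective (fun x => run A (start A) [:: letter x]).
  move=> x y /= Hxy; apply: respf_inj => b.
  rewrite -!resp_eq -!E /accepts.
  by move: Hxy; rewrite /run /= => ->.
by have := leq_card _ inj; rewrite card_ord.
Qed.
End LB.

Theorem theorem9 (m n : nat) (hm : 2 <= m) (hn : 2 <= n) :
  (forall (T : finType) (M : dfa T m) (N : dfa T n),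
     exists k, k <= 2 ^ m * n - n + 1 /\
       exists A : dfa T k, recognizes A (lunion (lrev (L_of M)) (L_of N))) /\
  (exists (T : finType) (M : dfa T m) (N : dfa T n),
     state_complexity_is (lunion (lrev (L_of M)) (L_of N)) (2 ^ m * n - n + 1)).
Proof.
split.
  move=> T M N; exists #|{: Xt m n}|; split; first by rewrite card_X.
  by exists (ub_dfa M N); apply: ub_rec.
case: m hm => [|[|m]] // _; case: n hn => [|[|n]] // _.
exists (LT m n), (WM m n), (WN m n); split.
  rewrite -(card_X m.+2 n.+2); exists (ub_dfa (WM m n) (WN m n)); apply: ub_rec.
move=> k A hA; rewrite -(card_X m.+2 n.+2); exact: lb hA.
Qed.
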